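(* Let $H$ be a subgroup of $B_\infty(D)$ such that $P_\infty(D)\subsetneq H\subset B_\infty(D)$. Then $H$ is not bi-orderable.
   Context: $B_n(D)$ is the Artin braid group on $n$ strands, with generators $\sigma_1,\dots,\sigma_{n-1}$ and relations $\sigma_i\sigma_j=\sigma_j\sigma_i$ for $|i-j|\ge 2$ and $\sigma_i\sigma_{i+1}\sigma_i=\sigma_{i+1}\sigma_i\sigma_{i+1}$; $P_n(D)$ is the kernel of the permutation homomorphism $B_n(D)\to S_n$, $\sigma_i\mapsto(i,i+1)$. The infinite braid group $B_\infty(D)$ is the direct limit of the groups $B_n(D)$ under the injective homomorphisms $\iota: B_n(D)\to B_{n+1}(D)$, $\iota(\sigma_i)=\sigma_i$; $P_\infty(D)$ is the direct limit of the $P_n(D)$ under the restrictions of $\iota$ (equivalently, the kernel of the induced permutation homomorphism from $B_\infty(D)$ to the group of finitely supported permutations of the positive integers). A group is bi-orderable if it admits a strict total ordering invariant under both left and right multiplication. *)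

(* Defs.v *)
(* The infinite braid group B_oo(D) is modelled by its standard
   presentation: words in the generators sigma_{i+1} (i : nat) and their
   inverses, modulo the congruence generated by free cancellation and the
   Artin braid relations.  Group elements are equivalence classes of words;
   subsets / orders are required to respect the equivalence. *)
From Stdlib Require Import List Arith Bool.
Import ListNotations.

(* (i, true) stands for sigma_{i+1}, (i, false) for sigma_{i+1}^{-1}. *)
Definition letter := (nat * bool)%type.
Definition word := list letter.

Definition winv (w : word) : word :=
  rev (map (fun l => (fst l, negb (snd l))) w).

Inductive braid_rel : word -> word -> Prop :=
| br_cancel : forall i b, braid_rel [(i, b); (i, negb b)] []
| br_comm : forall i j, i + 2 <= j \/ j + 2 <= i ->
    braid_rel [(i, true); (j, true)] [(j, true); (i, true)]
| br_braid : forall i,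
    braid_rel [(i, true); (S i, true); (i, true)]
              [(S i, true); (i, true); (S i, true)].

Inductive beq : word -> word -> Prop :=
| beq_refl : forall w, beq w w
| beq_sym : forall w1 w2, beq w1 w2 -> beq w2 w1
| beq_trans : forall w1 w2 w3, beq w1 w2 -> beq w2 w3 -> beq w1 w3
| beq_step : forall u v r1 r2, braid_rel r1 r2 -> beq (u ++ r1 ++ v) (u ++ r2 ++ v).

(* Permutation homomorphism: sigma_{i+1} |-> transposition (i, i+1)
   (0-indexed positions). *)
Definition transp (i k : nat) : nat :=
  if k =? i then S i else if k =? S i then i else k.

Definition perm_of (w : word) (k : nat) : nat :=
  fold_right (fun l acc => transp (fst l) acc) k w.

Definition pure (w : word) : Prop := forall k, perm_of w k = k.

Definition is_subgroup (H : word -> Prop) : Prop :=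
  (forall w1 w2, beq w1 w2 -> H w1 -> H w2) /\
  H [] /\
  (forall w1 w2, H w1 -> H w2 -> H (w1 ++ w2)) /\
  (forall w, H w -> H (winv w)).

Definition bi_orderable (H : word -> Prop) : Prop :=
  exists lt : word -> word -> Prop,
    (forall x x' y y', beq x x' -> beq y y' -> lt x y -> lt x' y') /\
    (forall x, H x -> ~ lt x x) /\
    (forall x y z, H x -> H y -> H z -> lt x y -> lt y z -> lt x z) /\
    (forall x y, H x -> H y -> beq x y \/ lt x y \/ lt y x) /\
    (forall x y z, H x -> H y -> H z -> lt x y -> lt (z ++ x) (z ++ y)) /\
    (forall x y z, H x -> H y -> H z -> lt x y -> lt (x ++ z) (y ++ z)).

(* Main.v *)
Require Import Defs.
From Stdlib Require Import List.
From Stdlib Require Import Arith Bool Lia ZArith Setoid Morphisms Classical.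
Import ListNotations.


Lemma beq_app_l : forall u u' v, beq u u' -> beq (v ++ u) (v ++ u').
Proof.
  intros u u' v H; induction H.
  - apply beq_refl.
  - now apply beq_sym.
  - eapply beq_trans; eauto.
  - rewrite !(app_assoc v). now apply beq_step.
Qed.

Lemma beq_app_r : forall u u' v, beq u u' -> beq (u ++ v) (u' ++ v).
Proof.
  intros u u' v H; induction H.
  - apply beq_refl.
  - now apply beq_sym.
  - eapply beq_trans; eauto.
  - rewrite <- !app_assoc. now apply beq_step.
Qed.

Add Parametric Relation : word beq
  reflexivity proved by beq_refl symmetry proved by beq_sym transitivity proved by beq_trans
  as beq_setoid.

Add Parametric Morphism : (@app letter) with signature beq ==> beq ==> beq as app_mor.
Proof.
  intros x y H x' y' H'. eapply beq_trans. apply beq_app_r; eauto. apply beq_app_l; auto.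
Qed.

Add Parametric Morphism (l : letter) : (@cons letter l) with signature beq ==> beq as cons_mor.
Proof.
  intros x y H. apply (beq_app_l x y [l]); auto.
Qed.

Lemma bcancel : forall i b r, beq ((i,b) :: (i, negb b) :: r) r.
Proof. intros. apply (beq_step [] r _ _ (br_cancel i b)). Qed.
Lemma bcancel' : forall i b r, beq ((i,negb b) :: (i, b) :: r) r.
Proof. intros. pose proof (beq_step [] r _ _ (br_cancel i (negb b))).
  rewrite negb_involutive in H. exact H. Qed.
Lemma bcomm : forall i j r, i + 2 <= j \/ j + 2 <= i ->
  beq ((i,true) :: (j,true) :: r) ((j,true) :: (i,true) :: r).
Proof. intros. apply (beq_step [] r _ _ (br_comm i j H)). Qed.
Lemma bbraid : forall i r,
  beq ((i,true) :: (S i,true) :: (i,true) :: r) ((S i,true) :: (i,true) :: (S i,true) :: r).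
Proof. intros. apply (beq_step [] r _ _ (br_braid i)). Qed.

Lemma transp_spec : forall i k, (k = i /\ transp i k = S i) \/ (k = S i /\ transp i k = i) \/
  (k <> i /\ k <> S i /\ transp i k = k).
Proof. intros. unfold transp. destruct (Nat.eqb_spec k i). left; auto.
  destruct (Nat.eqb_spec k (S i)); right; [left|right]; auto. Qed.
Ltac trs := repeat match goal with
  | |- context [transp ?i ?k] =>
  let H := fresh in destruct (transp_spec i k) as [[? H]|[[? H]|[? [? H]]]]; rewrite H in *; clear H
  | H0 : context [transp ?i ?k] |- _ =>
  let H := fresh in destruct (transp_spec i k) as [[? H]|[[? H]|[? [? H]]]]; rewrite H in *; clear H
 end.

Lemma transp_inv : forall i k, transp i (transp i k) = k.
Proof. intros; trs; lia. Qed.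

Lemma perm_app : forall u v k, perm_of (u ++ v) k = perm_of u (perm_of v k).
Proof. intros. unfold perm_of. now rewrite fold_right_app. Qed.

Lemma perm_cons : forall l u k, perm_of (l :: u) k = transp (fst l) (perm_of u k).
Proof. reflexivity. Qed.

Lemma perm_rev_l : forall u k, perm_of (rev u) (perm_of u k) = k.
Proof.
  induction u; intros; simpl. reflexivity.
  rewrite perm_app. simpl. rewrite transp_inv. apply IHu.
Qed.

Lemma perm_rev_r : forall u k, perm_of u (perm_of (rev u) k) = k.
Proof.
  induction u; intros; simpl. reflexivity.
  rewrite perm_app. simpl. rewrite IHu. apply transp_inv.
Qed.

Lemma perm_map_neg : forall l k,
  perm_of (map (fun l : nat * bool => (fst l, negb (snd l))) l) k = perm_of l k.
Proof. induction l as [|x l IH]; intros; simpl; [reflexivity| now rewrite IH]. Qed.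

Lemma perm_winv : forall u k, perm_of (winv u) k = perm_of (rev u) k.
Proof.
  intros. unfold winv. rewrite <- map_rev. apply perm_map_neg.
Qed.

Lemma perm_winv_l : forall u k, perm_of (winv u) (perm_of u k) = k.
Proof. intros. rewrite perm_winv. apply perm_rev_l. Qed.
Lemma perm_winv_r : forall u k, perm_of u (perm_of (winv u) k) = k.
Proof. intros. rewrite perm_winv. apply perm_rev_r. Qed.

Lemma perm_inj : forall u a b, perm_of u a = perm_of u b -> a = b.
Proof. intros. rewrite <- (perm_rev_l u a), <- (perm_rev_l u b). now rewrite H. Qed.

(* linking invariant *)
Definition pairP (P Q x y : nat) : bool :=
  ((x =? P) && (y =? Q)) || ((x =? Q) && (y =? P)).

Lemma pairP_sym : forall P Q x y, pairP P Q x y = pairP P Q y x.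
Proof. intros; unfold pairP. destruct (x =? P), (y =? Q), (x =? Q), (y =? P); reflexivity. Qed.

Fixpoint lk (P Q : nat) (w : word) (lab : nat -> nat) : Z :=
  match w with
  | [] => 0%Z
  | (i, b) :: w' =>
      ((if pairP P Q (lab i) (lab (S i)) then (if b then 1 else -1) else 0)
       + lk P Q w' (fun k => lab (transp i k)))%Z
  end.

Lemma lk_ext : forall P Q w lab lab', (forall k, lab k = lab' k) -> lk P Q w lab = lk P Q w lab'.
Proof.
  induction w as [|[i b] w IH]; intros; simpl; auto.
  rewrite !H. f_equal. apply IH. intros; apply H.
Qed.

Lemma lk_app : forall P Q u v lab,
  lk P Q (u ++ v) lab = (lk P Q u lab + lk P Q v (fun k => lab (perm_of u k)))%Z.
Proof.
  induction u as [|[i b] u IH]; intros; simpl.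
  - apply lk_ext. reflexivity.
  - rewrite IH. lia.
Qed.

Lemma rel_inv : forall r1 r2, braid_rel r1 r2 ->
  (forall k, perm_of r1 k = perm_of r2 k) /\ (forall P Q lab, lk P Q r1 lab = lk P Q r2 lab).
Proof.
  intros r1 r2 H; destruct H; split; intros.
  - simpl. apply transp_inv.
  - simpl. rewrite (pairP_sym P Q (lab (transp i i))). 
    assert (A : transp i i = S i) by (trs; lia).
    assert (B : transp i (S i) = i) by (trs; lia). rewrite A, B. destruct b; simpl; destruct (pairP _ _ _ _); lia.
  - simpl. trs; lia.
  - simpl. assert (E1 : transp i j = j) by (trs; lia).
    assert (E2 : transp i (S j) = S j) by (trs; lia).
    assert (E3 : transp j i = i) by (trs; lia).
    assert (E4 : transp j (S i) = S i) by (trs; lia).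
    rewrite E1, E2, E3, E4. lia.
  - simpl. trs; lia.
  - simpl.
    assert (A1 : transp i (S i) = i) by (trs; lia).
    assert (A2 : transp i (S (S i)) = S (S i)) by (trs; lia).
    assert (A3 : transp (S i) i = i) by (trs; lia).
    assert (A4 : transp (S i) (S i) = S (S i)) by (trs; lia).
    assert (A5 : transp (S i) (S (S i)) = S i) by (trs; lia).
    assert (A6 : transp i i = S i) by (trs; lia).
    assert (A7 : transp i (S (S i)) = S (S i)) by (trs; lia).
    rewrite ?A1, ?A2, ?A3, ?A4, ?A5, ?A6, ?A7.
    destruct (pairP P Q (lab i) (lab (S i))), (pairP P Q (lab i) (lab (S (S i)))),
      (pairP P Q (lab (S i)) (lab (S (S i)))); lia.
Qed.

Lemma beq_inv : forall w1 w2, beq w1 w2 ->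
  (forall k, perm_of w1 k = perm_of w2 k) /\ (forall P Q lab, lk P Q w1 lab = lk P Q w2 lab).
Proof.
  intros w1 w2 H; induction H.
  - split; auto.
  - destruct IHbeq; split; intros; symmetry; auto.
  - destruct IHbeq1 as [A1 B1], IHbeq2 as [A2 B2]; split; intros.
    rewrite A1; auto. rewrite B1; auto.
  - destruct (rel_inv _ _ H) as [Hp Hl]. split; intros.
    + rewrite !perm_app. now rewrite Hp.
    + rewrite !lk_app. rewrite Hl. f_equal. f_equal. apply lk_ext. intros.
      simpl. now rewrite Hp.
Qed.


Definition neg (l : letter) : letter := (fst l, negb (snd l)).

Lemma winv_cons : forall l u, winv (l :: u) = winv u ++ [neg l].
Proof. intros. unfold winv. simpl. reflexivity. Qed.

Lemma winv_app : forall u v, winv (u ++ v) = winv v ++ winv u.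
Proof. intros. unfold winv. rewrite map_app, rev_app_distr. reflexivity. Qed.

Lemma winv_r : forall u, beq (u ++ winv u) [].
Proof.
  induction u as [|[i b] u IH]; simpl. reflexivity.
  rewrite winv_cons. rewrite app_assoc. rewrite IH. simpl. unfold neg; simpl.
  apply (bcancel i b []).
Qed.

Lemma winv_l : forall u, beq (winv u ++ u) [].
Proof.
  induction u as [|[i b] u IH]; simpl. reflexivity.
  rewrite winv_cons. rewrite <- app_assoc. simpl. unfold neg; simpl.
  rewrite (bcancel' i b u). apply IH.
Qed.

Lemma subH : forall H, is_subgroup H -> forall w1 w2, beq w1 w2 -> H w1 -> H w2.
Proof. intros H [A _] ; exact A. Qed.
Lemma subH_nil : forall H, is_subgroup H -> H [].
Proof. intros H [_ [A _]] ; exact A. Qed.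
Lemma subH_app : forall H, is_subgroup H -> forall w1 w2, H w1 -> H w2 -> H (w1 ++ w2).
Proof. intros H [_ [_ [A _]]] ; exact A. Qed.
Lemma subH_inv : forall H, is_subgroup H -> forall w, H w -> H (winv w).
Proof. intros H [_ [_ [_ A]]] ; exact A. Qed.

Fixpoint pw (x : word) (n : nat) : word :=
  match n with 0 => [] | S n => x ++ pw x n end.

Lemma In_pw : forall x n l, In l (pw x n) -> In l x.
Proof. induction n; simpl; intros. contradiction. apply in_app_or in H as [H|H]; auto. Qed.

Lemma H_pw : forall H, is_subgroup H -> forall x n, H x -> H (pw x n).
Proof. intros. induction n; simpl. now apply subH_nil. now apply subH_app. Qed.

Lemma pw_conj : forall b x n, beq (pw (b ++ x ++ winv b) n) (b ++ pw x n ++ winv b).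
Proof.
  induction n; simpl. symmetry. apply winv_r.
  rewrite IHn. rewrite <- !app_assoc.
  rewrite (app_assoc (winv b) b). rewrite winv_l. simpl. reflexivity.
Qed.

Lemma lt_pw (H : word -> Prop) (HS : is_subgroup H) (lt : word -> word -> Prop)
  (Lresp : forall x x' y y', beq x x' -> beq y y' -> lt x y -> lt x' y')
  (Lirr : forall x, H x -> ~ lt x x)
  (Ltr : forall x y z, H x -> H y -> H z -> lt x y -> lt y z -> lt x z)
  (Ltri : forall x y, H x -> H y -> beq x y \/ lt x y \/ lt y x)
  (Lleft : forall x y z, H x -> H y -> H z -> lt x y -> lt (z ++ x) (z ++ y))
  (Lright : forall x y z, H x -> H y -> H z -> lt x y -> lt (x ++ z) (y ++ z)) : forall x z, H x -> H z -> lt x z -> forall n, lt (pw x (S n)) (pw z (S n)).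
Proof.
  intros x z Hx Hz Hl n. induction n.
  - simpl. rewrite !app_nil_r. exact Hl.
  - change (lt (x ++ pw x (S n)) (z ++ pw z (S n))).
    apply Ltr with (x ++ pw z (S n)).
    + apply subH_app; auto. apply H_pw; auto.
    + apply subH_app; auto. apply H_pw; auto.
    + apply subH_app; auto. apply H_pw; auto.
    + apply Lleft; auto; apply H_pw; auto.
    + apply Lright; auto; apply H_pw; auto.
Qed.

Lemma root_comm (H : word -> Prop) (HS : is_subgroup H) (lt : word -> word -> Prop)
  (Lresp : forall x x' y y', beq x x' -> beq y y' -> lt x y -> lt x' y')
  (Lirr : forall x, H x -> ~ lt x x)
  (Ltr : forall x y z, H x -> H y -> H z -> lt x y -> lt y z -> lt x z)
  (Ltri : forall x y, H x -> H y -> beq x y \/ lt x y \/ lt y x)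
  (Lleft : forall x y z, H x -> H y -> H z -> lt x y -> lt (z ++ x) (z ++ y))
  (Lright : forall x y z, H x -> H y -> H z -> lt x y -> lt (x ++ z) (y ++ z)) : forall x y k, H x -> H y -> 1 <= k ->
  beq (pw x k ++ y) (y ++ pw x k) -> beq (x ++ y) (y ++ x).
Proof.
  intros x y k Hx Hy Hk Hc.
  set (z := y ++ x ++ winv y).
  assert (Hz : H z). { unfold z. apply subH_app; auto. apply subH_app; auto. apply subH_inv; auto. }
  assert (Ez : beq (pw z k) (pw x k)).
  { unfold z. rewrite pw_conj. rewrite app_assoc. rewrite <- Hc. rewrite <- app_assoc.
    rewrite winv_r. rewrite app_nil_r. reflexivity. }
  destruct (Ltri x z Hx Hz) as [E|[L|L]].
  - rewrite E at 1. unfold z. rewrite <- !app_assoc. rewrite winv_l. rewrite app_nil_r. reflexivity.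
  - destruct k as [|k']; [lia|].
    exfalso. apply (Lirr (pw x (S k'))). apply H_pw; auto.
    eapply Lresp. reflexivity. apply Ez. apply (lt_pw H HS lt Lresp Lirr Ltr Ltri Lleft Lright); auto.
  - destruct k as [|k']; [lia|].
    exfalso. apply (Lirr (pw x (S k'))). apply H_pw; auto.
    eapply Lresp. apply Ez. reflexivity. apply (lt_pw H HS lt Lresp Lirr Ltr Ltri Lleft Lright); auto.
Qed.


Definition far (i j : nat) := i + 2 <= j \/ j + 2 <= i.

Lemma comm_letter_word : forall i v, (forall l, In l v -> snd l = true /\ far i (fst l)) ->
  beq ((i,true) :: v) (v ++ [(i,true)]).
Proof.
  induction v as [|[j b] v IH]; intros Hv; simpl. reflexivity.
  destruct (Hv (j,b) (or_introl eq_refl)) as [Hb Hf]. simpl in Hb, Hf. subst b.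
  rewrite bcomm by exact Hf. rewrite IH. reflexivity.
  intros l Hl. apply Hv. now right.
Qed.

Lemma comm_words : forall u v, (forall l, In l u -> snd l = true) -> (forall l, In l v -> snd l = true) ->
  (forall l1 l2, In l1 u -> In l2 v -> far (fst l1) (fst l2)) -> beq (u ++ v) (v ++ u).
Proof.
  induction u as [|[i b] u IH]; intros v Hu Hv Hf; simpl.
  - rewrite app_nil_r. reflexivity.
  - assert (b = true) by (apply (Hu (i,b)); now left). subst b.
    rewrite IH; auto. 2:{ intros; apply Hu; now right. } 2:{ intros; apply Hf; auto; now right. }
    change ((i,true) :: v ++ u) with (((i,true) :: v) ++ u).
    rewrite comm_letter_word. rewrite <- app_assoc. reflexivity.
    intros l Hl. split; auto. apply (Hf (i,true)); auto. now left.
Qed.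

Lemma fix_high : forall w N, (forall l, In l w -> fst l + 1 < N) -> forall k, N <= k -> perm_of w k = k.
Proof.
  induction w as [|[i b] w IH]; intros N Hw k Hk; simpl. reflexivity.
  rewrite (IH N); auto. 2:{ intros; apply Hw; now right. }
  assert (i + 1 < N) by (apply (Hw (i,b)); now left). trs; lia.
Qed.

Lemma fix_low : forall w M, (forall l, In l w -> M <= fst l) -> forall k, k < M -> perm_of w k = k.
Proof.
  induction w as [|[i b] w IH]; intros M Hw k Hk; simpl. reflexivity.
  rewrite (IH M); auto. 2:{ intros; apply Hw; now right. }
  assert (M <= i) by (apply (Hw (i,b)); now left). trs; lia.
Qed.

Definition mk (i : nat) : letter := (i, true).

Lemma perm_chain : forall d a, perm_of (map mk (seq a d)) (a + d) = a.
Proof.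
  induction d; intros; simpl. lia.
  replace (a + S d) with (S a + d) by lia. rewrite IHd. trs; lia.
Qed.

Lemma lift : forall N L g, (forall a b, g a = g b -> a = b) -> (forall k, N <= k -> g k = k) ->
  (forall k, k < L -> g k = k) ->
  exists w, (forall l, In l w -> snd l = true /\ L <= fst l /\ fst l + 1 < N) /\
    forall k, perm_of w k = g k.
Proof.
  induction N; intros L g Hinj Hhi Hlo.
  - exists []. split. simpl; tauto. intros; simpl. symmetry; apply Hhi; lia.
  - destruct (lt_dec N L) as [HNL|HNL].
    + destruct (IHN L g) as [w [Hw Hp]]; auto.
      intros k Hk. destruct (Nat.eq_dec k N). subst; apply Hlo; auto. apply Hhi; lia.
      exists w; split; auto. intros l Hl; destruct (Hw l Hl); split; [|split]; lia.
    + set (a := g N).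
      assert (HaN : a <= N).
      { destruct (le_lt_dec a N); auto. exfalso. assert (g a = a) by (apply Hhi; lia).
        assert (a = N) by (apply Hinj; unfold a in *; congruence). lia. }
      assert (HaL : L <= a).
      { destruct (le_lt_dec L a); auto. exfalso. assert (g a = a) by (apply Hlo; lia).
        assert (a = N) by (apply Hinj; unfold a in *; congruence). lia. }
      set (sw := map mk (seq a (N - a))).
      assert (Hsw : perm_of sw N = a).
      { unfold sw. replace N with (a + (N - a)) at 2 by lia. apply perm_chain. }
      assert (Hswl : forall l, In l sw -> snd l = true /\ a <= fst l /\ fst l + 1 <= N).
      { intros l Hl. unfold sw in Hl. apply in_map_iff in Hl as [i [Hi Hin]]. subst l.
        apply in_seq in Hin. simpl. lia. }
      set (h := fun k => perm_of (rev sw) (g k)).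
      destruct (IHN L h) as [w [Hw Hp]].
      * intros x y E. unfold h in E. apply perm_inj in E. auto.
      * intros k Hk. unfold h. destruct (Nat.eq_dec k N).
        -- subst k. fold a. rewrite <- Hsw. apply perm_rev_l.
        -- rewrite Hhi by lia. apply (fix_high _ (S N)); [|lia].
           intros l Hl. apply in_rev in Hl. destruct (Hswl l Hl); lia.
      * intros k Hk. unfold h. rewrite Hlo by auto. apply (fix_low _ a); [|lia].
        intros l Hl. apply in_rev in Hl. destruct (Hswl l Hl); lia.
      * exists (sw ++ w). split.
        -- intros l Hl. apply in_app_or in Hl as [Hl|Hl].
           ++ destruct (Hswl l Hl) as [? ?]; split; [auto|lia].
           ++ destruct (Hw l Hl); split; [auto|lia].
        -- intros k. rewrite perm_app, Hp. unfold h. apply perm_rev_r.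
Qed.

Definition sw (x y k : nat) := if k =? x then y else if k =? y then x else k.

Lemma sw_inj : forall x y a b, sw x y a = sw x y b -> a = b.
Proof. unfold sw; intros. destruct (Nat.eqb_spec a x), (Nat.eqb_spec a y), (Nat.eqb_spec b x),
  (Nat.eqb_spec b y); lia. Qed.

Fixpoint rho (v : nat -> nat) (m : nat) : nat -> nat :=
  match m with
  | 0 => fun k => k
  | S m => fun k => sw (rho v m m) (v m) (rho v m k)
  end.

Lemma rho_props : forall n v B, (forall i j, i < n -> j < n -> v i = v j -> i = j) ->
  (forall i, i < n -> v i < B) -> n <= B -> forall m, m <= n ->
  (forall a b, rho v m a = rho v m b -> a = b) /\ (forall k, B <= k -> rho v m k = k) /\
  (forall j, j < m -> rho v m j = v j).
Proof.
  intros n v B Hv HB HnB. induction m; intros Hm.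
  - simpl. split; [intros; auto|split; [intros; auto|intros; lia]].
  - destruct IHm as [Hi [Hf Hj]]; [lia|]. simpl.
    assert (Hmm : rho v m m < B).
    { destruct (le_lt_dec B (rho v m m)); auto. exfalso.
      assert (rho v m (rho v m m) = rho v m m) by (apply Hf; auto).
      apply Hi in H. lia. }
    split; [|split].
    + intros a b E. apply sw_inj in E. auto.
    + intros k Hk. rewrite (Hf k Hk). unfold sw.
      assert (v m < B) by (apply HB; lia).
      destruct (Nat.eqb_spec k (rho v m m)); [lia|]. destruct (Nat.eqb_spec k (v m)); lia.
    + intros j Hjm. unfold sw. destruct (Nat.eq_dec j m).
      * subst. rewrite Nat.eqb_refl. auto.
      * rewrite Hj by lia. destruct (Nat.eqb_spec (v j) (rho v m m)).
        -- exfalso. rewrite <- Hj in e by lia. apply Hi in e. lia.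
        -- destruct (Nat.eqb_spec (v j) (v m)); auto. apply Hv in e; lia.
Qed.


Definition d (j : nat) : word := map mk (seq 0 (S j)).

Lemma d_snoc : forall j, d (S j) = d j ++ [mk (S j)].
Proof. intros. unfold d. rewrite seq_S. rewrite map_app. reflexivity. Qed.

Lemma d_split : forall j, d j = map mk (seq 0 j) ++ [mk j].
Proof. intros. unfold d. rewrite seq_S. rewrite map_app. reflexivity. Qed.

Lemma comm_letter_list : forall i A rest, (forall l, In l A -> snd l = true /\ far i (fst l)) ->
  beq (A ++ (i,true) :: rest) ((i,true) :: A ++ rest).
Proof.
  intros. change ((i,true) :: A ++ rest) with (((i,true) :: A) ++ rest).
  rewrite (comm_letter_word i A H). rewrite <- app_assoc. reflexivity.
Qed.

Lemma in_mk_seq : forall l a b, In l (map mk (seq a b)) -> snd l = true /\ a <= fst l < a + b.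
Proof. intros. apply in_map_iff in H as [i [Hi Hin]]. subst. apply in_seq in Hin. simpl. lia. Qed.

Lemma L1 : forall j i rest, i < j -> beq (d j ++ mk i :: rest) (mk (S i) :: d j ++ rest).
Proof.
  intros j i rest Hij.
  assert (E : d j = map mk (seq 0 i) ++ mk i :: mk (S i) :: map mk (seq (S (S i)) (j - S i))).
  { unfold d. replace (S j) with (i + (2 + (j - S i))) by lia. rewrite seq_app, map_app. simpl.
    reflexivity. }
  rewrite E. rewrite <- !app_assoc. simpl.
  rewrite (comm_letter_list i (map mk (seq (S (S i)) (j - S i))) rest).
  2:{ intros l Hl. apply in_mk_seq in Hl. split; [tauto|unfold far; lia]. }
  unfold mk at 2 3 4. rewrite bbraid.
  rewrite (comm_letter_list (S i) (map mk (seq 0 i))).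
  2:{ intros l Hl. apply in_mk_seq in Hl. split; [tauto|unfold far; lia]. }
unfold mk; reflexivity.
Qed.

Lemma single_app : forall (x : letter) Y, [x] ++ Y = x :: Y.
Proof. reflexivity. Qed.

Lemma L2 : forall j rest, beq (d j ++ d j ++ mk j :: rest) (mk 0 :: d j ++ d j ++ rest).
Proof.
  induction j; intros rest.
  - simpl. reflexivity.
  - assert (Hd : forall X, d j ++ X = map mk (seq 0 j) ++ (j,true) :: X).
    { intros. rewrite d_split. rewrite <- app_assoc. reflexivity. }
    assert (Hse : forall X, beq ((S j,true) :: d j ++ X) (map mk (seq 0 j) ++ (S j,true) :: (j,true) :: X)).
    { intros. rewrite Hd. symmetry. apply comm_letter_list.
      intros l Hl. apply in_mk_seq in Hl. split; [tauto|unfold far; lia]. }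
    rewrite !d_snoc. rewrite <- !app_assoc. rewrite !single_app. unfold mk at 1 2 3 4.
    transitivity (mk 0 :: d j ++ d j ++ (S j,true) :: (j,true) :: rest).
    + rewrite (Hse ((S j, true) :: (S j, true) :: rest)).
      rewrite <- (bbraid j ((S j, true) :: rest)).
      rewrite <- Hd.
      rewrite <- (bbraid j rest).
      change ((j,true) :: (S j,true) :: (j,true) :: rest) with (mk j :: (S j,true) :: (j,true) :: rest).
      apply IHj.
    + rewrite (Hse ((S j, true) :: rest)).
      rewrite <- (bbraid j rest).
      rewrite <- Hd. reflexivity.
Qed.

Lemma pw_shift : forall j m rest, m <= j -> beq (pw (d j) m ++ mk 0 :: rest) (mk m :: pw (d j) m ++ rest).
Proof.
  induction m; intros rest Hm; cbn [pw]. reflexivity.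
  rewrite <- app_assoc. rewrite IHm by lia. rewrite L1 by lia. rewrite <- app_assoc. reflexivity.
Qed.

Lemma d_central : forall j rest, beq (pw (d j) (S (S j)) ++ mk 0 :: rest) (mk 0 :: pw (d j) (S (S j)) ++ rest).
Proof.
  intros. cbn [pw]. rewrite <- !app_assoc. rewrite pw_shift by lia. rewrite L2.
  reflexivity.
Qed.

Definition y0 : word := [mk 0; mk 0].

Lemma comm_y0 : forall X, (forall rest, beq (X ++ mk 0 :: rest) (mk 0 :: X ++ rest)) ->
  beq (X ++ y0) (y0 ++ X).
Proof.
  intros X HX. unfold y0. rewrite HX. simpl. rewrite HX. rewrite app_nil_r. reflexivity.
Qed.

Definition c3 : word := [mk 0; mk 1; mk 0].

Lemma c3_central : forall rest, beq (pw c3 2 ++ mk 0 :: rest) (mk 0 :: pw c3 2 ++ rest).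
Proof.
  intros. unfold c3, mk. simpl.
  rewrite (bbraid 0 ((0,true) :: rest)).
  rewrite <- (bbraid 0 ((0,true) :: (1,true) :: (0,true) :: rest)). reflexivity.
Qed.

Lemma perm_d : forall j k, perm_of (d j) k = if k <=? j then S k else if k =? S j then 0 else k.
Proof.
  induction j; intros k.
  - simpl. unfold transp. destruct k as [|[|k]]; reflexivity.
  - rewrite d_snoc, perm_app. simpl perm_of at 2. rewrite IHj.
    trs; destruct (Nat.leb_spec k (S j)), (Nat.leb_spec (S (S j)) j), (Nat.eqb_spec (S (S j)) (S j)),
      (Nat.eqb_spec k (S (S j))); try lia;
    repeat match goal with |- context [?a <=? ?b] => destruct (Nat.leb_spec a b) end;
    repeat match goal with |- context [?a =? ?b] => destruct (Nat.eqb_spec a b) end; lia.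
Qed.


Lemma bound_fun : forall n (v : nat -> nat), exists B, forall i, i < n -> v i < B.
Proof.
  induction n; intros. exists 0; intros; lia.
  destruct (IHn v) as [B HB]. exists (B + v n + 1). intros i Hi.
  destruct (Nat.eq_dec i n). subst; lia. specialize (HB i ltac:(lia)). lia.
Qed.

Lemma wbound : forall (w : word), exists N, forall l, In l w -> fst l + 1 < N.
Proof.
  induction w as [|l w [N HN]]. exists 0; simpl; tauto.
  exists (N + fst l + 2). intros l' [E|Hl]. subst; lia. specialize (HN l' Hl). lia.
Qed.

Lemma lk_winv : forall P Q u M, lk P Q (winv u) (fun q => M (perm_of u q)) = (- lk P Q u M)%Z.
Proof.
  intros. pose proof (proj2 (beq_inv _ _ (winv_r u)) P Q M) as E.
  rewrite lk_app in E. simpl in E. lia.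
Qed.

Lemma lk_y : forall P Q b M, lk P Q (b ++ y0 ++ winv b) M = lk P Q y0 (fun q => M (perm_of b q)).
Proof.
  intros. rewrite !lk_app.
  rewrite (lk_ext P Q (winv b) _ (fun q => M (perm_of b q))).
  - rewrite lk_winv. lia.
  - intros k. unfold y0, mk. simpl. rewrite transp_inv. reflexivity.
Qed.

Lemma lk_y0 : forall P Q L, lk P Q y0 L = Z.mul (if pairP P Q (L 0) (L 1) then 1%Z else 0%Z) 2%Z.
Proof.
  intros. unfold y0, mk. simpl. change (transp 0 1) with 0. rewrite (pairP_sym P Q (L 1)). destruct (pairP P Q (L 0) (L 1)); lia.
Qed.

Lemma pw_split : forall u v k, (forall l, In l u -> snd l = true) -> (forall l, In l v -> snd l = true) ->
  (forall l1 l2, In l1 u -> In l2 v -> far (fst l1) (fst l2)) ->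
  beq (pw (u ++ v) k) (pw u k ++ pw v k).
Proof.
  intros u v k Hu Hv Hf. induction k; cbn [pw]. reflexivity.
  rewrite IHk. rewrite <- !app_assoc. apply app_mor. reflexivity.
  rewrite !app_assoc. apply app_mor; [|reflexivity].
  apply comm_words; [exact Hv| |].
  - intros l Hl; apply In_pw in Hl; auto.
  - intros l1 l2 H1 H2. apply In_pw in H2. unfold far in *. specialize (Hf l2 l1 H2 H1). lia.
Qed.

Theorem generic (H : word -> Prop) (HS : is_subgroup H) (HP : forall w, pure w -> H w)
  (w : word) (Hw : H w) (n : nat) (v th : nat -> nat) (c1 : word) (k : nat) :
  2 <= n ->
  (forall i j, i < n -> j < n -> v i = v j -> i = j) ->
  (forall i, i < n -> th i < n /\ perm_of w (v i) = v (th i)) ->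
  (forall i, i < n -> exists j, j < n /\ th j = i) ->
  (forall l, In l c1 -> snd l = true /\ fst l + 1 < n) ->
  (forall q, q < n -> perm_of c1 q = th q) ->
  1 <= k ->
  (forall rest, beq (pw c1 k ++ mk 0 :: rest) (mk 0 :: pw c1 k ++ rest)) ->
  pairP (v 0) (v 1) (v (th 0)) (v (th 1)) = false ->
  ~ bi_orderable H.
Proof.
  intros Hn Hvinj Hth Hsurj Hc1 Hpc1 Hk Hcent Hpair.
  destruct (bound_fun n v) as [B HB].
  set (B0 := B + n + 1).
  destruct (rho_props n v B0 Hvinj ltac:(intros i Hi; specialize (HB i Hi); unfold B0; lia)
     ltac:(unfold B0; lia) n (le_n n)) as [Rinj [Rfix Rv]].
  destruct (lift B0 0 (rho v n) Rinj Rfix ltac:(intros; lia)) as [b [Hbl Hbp]].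
  destruct (wbound w) as [Nw HNw].
  set (B1 := B0 + Nw).
  set (pw_ := perm_of w).
  set (g := fun q => if q <? n then q else perm_of (winv b) (perm_of w (perm_of b q))).
  assert (Hkey : forall q, n <= q -> n <= perm_of (winv b) (perm_of w (perm_of b q))).
  { intros q Hq. destruct (le_lt_dec n (perm_of (winv b) (perm_of w (perm_of b q)))) as [|Hi]; auto.
    exfalso. set (i := perm_of (winv b) (perm_of w (perm_of b q))) in *.
    assert (E1 : perm_of w (perm_of b q) = v i).
    { rewrite <- (Rv i Hi), <- Hbp. unfold i. now rewrite perm_winv_r. }
    destruct (Hsurj i Hi) as [j [Hj Hji]].
    assert (E2 : perm_of w (v j) = v i) by (rewrite (proj2 (Hth j Hj)); congruence).
    rewrite <- E2 in E1. apply perm_inj in E1. rewrite Hbp, <- (Rv j Hj) in E1.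
    apply Rinj in E1. lia. }
  assert (Hginj : forall a c, g a = g c -> a = c).
  { intros a c E. unfold g in E.
    destruct (Nat.ltb_spec a n), (Nat.ltb_spec c n); auto.
    - specialize (Hkey c ltac:(lia)). lia.
    - specialize (Hkey a ltac:(lia)). lia.
    - apply perm_inj, perm_inj, perm_inj in E. auto. }
  assert (Hbfix : forall q, B0 <= q -> perm_of b q = q) by (intros; rewrite Hbp; auto).
  assert (Hwfix : forall q, Nw <= q -> perm_of w q = q) by (intros; apply (fix_high w Nw); auto).
  assert (Hghi : forall q, B1 <= q -> g q = q).
  { intros q Hq. unfold g. destruct (Nat.ltb_spec q n). unfold B1, B0 in *; lia.
    rewrite Hbfix by (unfold B1 in *; lia). rewrite Hwfix by (unfold B1 in *; lia).
    rewrite <- (Hbfix q) at 1 by (unfold B1 in *; lia). apply perm_winv_l. }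
  assert (Hglo : forall q, q < n -> g q = q).
  { intros q Hq. unfold g. destruct (Nat.ltb_spec q n); lia. }
  destruct (lift B1 n g Hginj Hghi Hglo) as [c2 [Hc2l Hc2p]].
  set (c := b ++ (c1 ++ c2) ++ winv b).
  set (y := b ++ y0 ++ winv b).
  assert (Hc2low : forall q, q < n -> perm_of c2 q = q).
  { apply fix_low. intros l Hl. apply Hc2l; auto. }
  assert (Hc1high : forall q, n <= q -> perm_of c1 q = q).
  { apply fix_high. intros l Hl. apply Hc1; auto. }
  assert (Hpc : forall q, perm_of c q = perm_of w q).
  { intros q. unfold c. rewrite !perm_app.
    set (r := perm_of (winv b) q).
    assert (Eq : q = perm_of b r) by (unfold r; now rewrite perm_winv_r).
    destruct (lt_dec r n) as [Hr|Hr].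
    - rewrite Hc2low by auto. rewrite Hpc1 by auto. rewrite Hbp, Rv by (apply Hth; auto).
      rewrite Eq, Hbp, Rv by auto. symmetry; apply Hth; auto.
    - rewrite Hc2p. unfold g. destruct (Nat.ltb_spec r n); [lia|].
      rewrite Hc1high by (apply Hkey; lia). rewrite perm_winv_r. now rewrite <- Eq. }
  assert (Hy : forall q, perm_of y q = q).
  { intros q. unfold y, y0, mk. rewrite !perm_app. simpl. rewrite transp_inv. apply perm_winv_r. }
  assert (HyH : H y) by (apply HP; exact Hy).
  assert (HcH : H c).
  { apply (subH H HS (w ++ (winv w ++ c))).
    - rewrite app_assoc, winv_r. reflexivity.
    - apply subH_app; auto. apply HP. intros q. rewrite perm_app, Hpc. apply perm_winv_l. }
  assert (Hcomm : beq (pw c k ++ y) (y ++ pw c k)).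
  { unfold c, y. rewrite pw_conj. rewrite <- !app_assoc.
    rewrite (app_assoc (winv b) b). rewrite winv_l. simpl.
    rewrite (app_assoc (winv b) b). rewrite winv_l. simpl.
    apply app_mor; [reflexivity|].
    transitivity ((pw (c1++c2) k ++ y0) ++ winv b). { rewrite <- app_assoc; reflexivity. }
    transitivity ((y0 ++ pw (c1++c2) k) ++ winv b). 2:{ rewrite <- app_assoc; reflexivity. }
    apply app_mor; [|reflexivity].
    rewrite pw_split.
    2:{ intros l Hl; apply Hc1; auto. }
    2:{ intros l Hl; apply Hc2l; auto. }
    2:{ intros l1 l2 H1 H2. apply Hc1 in H1. apply Hc2l in H2. unfold far. lia. }
    rewrite <- app_assoc. rewrite (comm_words (pw c2 k) y0).
    2:{ intros l Hl; apply In_pw, Hc2l in Hl; tauto. }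
    2:{ intros l Hl; unfold y0, mk in Hl; simpl in Hl; intuition; subst; reflexivity. }
    2:{ intros l1 l2 H1 H2. apply In_pw, Hc2l in H1. unfold y0, mk in H2; simpl in H2.
        unfold far; intuition; subst; simpl; lia. }
    rewrite app_assoc. rewrite (comm_y0 (pw c1 k)) by auto. rewrite <- app_assoc. reflexivity. }
  intros [lt [L1' [L2' [L3' [L4' [L5' L6']]]]]].
  assert (E := root_comm H HS lt L1' L2' L3' L4' L5' L6' c y k HcH HyH Hk Hcomm).
  pose proof (proj2 (beq_inv _ _ E) (v 0) (v 1) (fun q => q)) as Elk.
  rewrite !lk_app in Elk.
  rewrite (lk_ext _ _ c (fun q => perm_of y q) (fun q => q)) in Elk by auto.
  unfold y in Elk. rewrite !lk_y, !lk_y0 in Elk.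
  rewrite !Hbp, !Rv in Elk by lia. rewrite !Hpc in Elk.
  rewrite (proj2 (Hth 0 ltac:(lia))), (proj2 (Hth 1 ltac:(lia))) in Elk.
  rewrite Hpair in Elk. unfold pairP in Elk. rewrite !Nat.eqb_refl in Elk. cbn [andb orb] in Elk. lia.
Qed.


Lemma pigeon : forall N (f : nat -> nat), (forall i, i <= N -> f i < N) ->
  exists i j, i < j <= N /\ f i = f j.
Proof.
  induction N; intros f Hf.
  - specialize (Hf 0 (le_n 0)). lia.
  - set (x := f (S N)).
    destruct (classic (exists i, i <= N /\ f i = x)) as [[i [Hi Ei]]|Hno].
    + exists i, (S N). split; [lia|auto].
    + assert (Hne : forall i, i <= N -> f i <> x) by (intros i Hi E; apply Hno; eauto).
      destruct (Nat.eq_dec x N) as [Ex|Ex].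
      * destruct (IHN f) as [i [j [Hij E]]].
        { intros i Hi. specialize (Hf i ltac:(lia)). specialize (Hne i Hi). lia. }
        exists i, j; split; [lia|auto].
      * set (g := fun i => if f i =? N then x else f i).
        destruct (IHN g) as [i [j [Hij E]]].
        { intros i Hi. unfold g. assert (x < S N) by (apply Hf; lia). specialize (Hf i ltac:(lia)).
          destruct (Nat.eqb_spec (f i) N); lia. }
        exists i, j. split; [lia|]. unfold g in E.
        destruct (Nat.eqb_spec (f i) N), (Nat.eqb_spec (f j) N); try congruence.
        -- exfalso. apply (Hne j); [lia|auto].
        -- exfalso. apply (Hne i); [lia|auto].
Qed.

Lemma least : forall (P : nat -> Prop) m, (exists d, 1 <= d <= m /\ P d) ->
  exists p, 1 <= p /\ P p /\ forall q, 1 <= q < p -> ~ P q.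
Proof.
  intros P m. induction m; intros [d [Hd Pd]]. lia.
  destruct (classic (exists d', 1 <= d' <= m /\ P d')) as [Hex|Hno].
  - apply IHm; auto.
  - exists d. split; [lia|split; auto]. intros q Hq Pq. apply Hno. exists q; split; auto. lia.
Qed.

Lemma iter_inj : forall (f : nat -> nat), (forall a b, f a = f b -> a = b) ->
  forall i x y, Nat.iter i f x = Nat.iter i f y -> x = y.
Proof. intros f Hf i. induction i; simpl; intros; auto. Qed.

Lemma iter_add' : forall (f : nat -> nat) i d x, Nat.iter (d + i) f x = Nat.iter i f (Nat.iter d f x).
Proof. intros. rewrite Nat.add_comm. apply Nat.iter_add. Qed.

Theorem mainTheorem13 (H : word -> Prop) :
  is_subgroup H ->
  (forall w, pure w -> H w) ->
  (exists w, H w /\ ~ pure w) ->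
  ~ bi_orderable H.
Proof.
  intros HS HP [w [Hw Hnp]].
  assert (Ha : exists a, perm_of w a <> a).
  { apply not_all_ex_not. exact Hnp. }
  destruct Ha as [a Ha].
  destruct (wbound w) as [Nw HNw].
  assert (Hfix : forall q, Nw <= q -> perm_of w q = q) by (apply fix_high; auto).
  assert (Hlt : forall q, q < Nw -> perm_of w q < Nw).
  { intros q Hq. destruct (le_lt_dec Nw (perm_of w q)); auto. exfalso.
    assert (perm_of w (perm_of w q) = perm_of w q) by (apply Hfix; auto).
    apply perm_inj in H0. lia. }
  assert (HaN : a < Nw).
  { destruct (le_lt_dec Nw a); auto. exfalso. apply Ha. apply Hfix; auto. }
  set (f := perm_of w).
  assert (Hfinj : forall x y, f x = f y -> x = y) by (intros; eapply perm_inj; eauto).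
  set (it := fun i => Nat.iter i f a).
  assert (Hit : forall i, it i < Nw).
  { intros i. unfold it. induction i; simpl; [auto|]. apply Hlt; auto. }
  destruct (pigeon Nw it (fun i _ => Hit i)) as [i [j [Hij Eij]]].
  assert (Hret : exists d, 1 <= d <= Nw /\ it d = a).
  { exists (j - i). split; [lia|]. unfold it in *.
    replace j with ((j - i) + i) in Eij by lia. rewrite iter_add' in Eij.
    symmetry in Eij. apply iter_inj in Eij; auto. }
  destruct (least (fun d => it d = a) Nw Hret) as [p [Hp1 [Hpa Hpmin]]].
  assert (Hp2 : 2 <= p).
  { destruct (Nat.eq_dec p 1); [|lia]. subst p. exfalso. apply Ha. exact Hpa. }
  assert (Hdist : forall i j, i < p -> j < p -> it i = it j -> i = j).
  { intros i' j' Hi Hj E.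
    assert (K : forall i j, i < j < p -> it i = it j -> False).
    { intros x y Hxy Exy. apply (Hpmin (y - x)); [lia|]. unfold it in *.
      replace y with ((y - x) + x) in Exy by lia. rewrite iter_add' in Exy.
      symmetry in Exy. apply iter_inj in Exy; auto. }
    destruct (lt_eq_lt_dec i' j') as [[L|L]|L]; auto; exfalso.
    - apply (K i' j'); auto.
    - apply (K j' i'); auto. }
  destruct (Nat.eq_dec p 2) as [Ep|Ep].
  -
    set (v := fun i => match i with 0 => a | 1 => Nw | _ => f a end).
    set (th := fun i => match i with 0 => 2 | 1 => 1 | _ => 0 end).
    assert (Hfa : f (f a) = a) by (subst p; exact Hpa).
    assert (Hfa2 : f a < Nw) by (apply Hlt; auto).
    apply (generic H HS HP w Hw 3 v th c3 2).
    + lia.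
    + intros x y Hx Hy E. unfold v in E.
      destruct x as [|[|[|x]]]; destruct y as [|[|[|y]]]; try lia; try congruence; exfalso; apply Ha; unfold f in *; congruence.
    + intros x Hx. destruct x as [|[|[|x]]]; simpl; try lia; split; auto; unfold v; simpl.
    + intros x Hx. destruct x as [|[|[|x]]]; [exists 2|exists 1|exists 0|lia]; simpl; split; auto.
    + intros l Hl. unfold c3, mk in Hl. simpl in Hl. intuition; subst l; simpl; auto.
    + intros q Hq. destruct q as [|[|[|q]]]; try lia; reflexivity.
    + lia.
    + apply c3_central.
    + unfold pairP, v, th. simpl.
      destruct (Nat.eqb_spec (f a) a); [exfalso; apply Ha; exact e|].
      destruct (Nat.eqb_spec (f a) Nw); [lia|]. reflexivity.
  -
    set (th := fun i => if i =? p - 1 then 0 else S i).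
    apply (generic H HS HP w Hw p it th (d (p - 2)) p).
    + lia.
    + exact Hdist.
    + intros x Hx. unfold th. destruct (Nat.eqb_spec x (p - 1)).
      * split; [lia|]. subst x. unfold it. replace p with (S (p - 1)) in Hpa by lia. exact Hpa.
      * split; [lia|]. reflexivity.
    + intros x Hx. destruct x as [|x].
      * exists (p - 1). split; [lia|]. unfold th. rewrite Nat.eqb_refl. reflexivity.
      * exists x. split; [lia|]. unfold th. destruct (Nat.eqb_spec x (p - 1)); [lia|reflexivity].
    + intros l Hl. unfold d in Hl. apply in_mk_seq in Hl. split; [tauto|lia].
    + intros q Hq. rewrite perm_d. unfold th.
      destruct (Nat.leb_spec q (p - 2)), (Nat.eqb_spec q (p - 1)); try lia; auto.
      destruct (Nat.eqb_spec q (S (p - 2))); lia.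
    + lia.
    + generalize (d_central (p - 2)). replace (S (S (p - 2))) with p by lia. auto.
    + unfold th. replace (0 =? p - 1) with false by (symmetry; apply Nat.eqb_neq; lia).
      replace (1 =? p - 1) with false by (symmetry; apply Nat.eqb_neq; lia).
      unfold pairP.
      destruct (Nat.eqb_spec (it 1) (it 0)) as [E|E].
      { apply Hdist in E; lia. }
      destruct (Nat.eqb_spec (it 2) (it 0)) as [E'|E'].
      { apply Hdist in E'; lia. }
      simpl. rewrite andb_false_r. reflexivity.
Qed.
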